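(* Let $\Sigma$ be a polynomial orbit-finite set, $M$ an orbit-finite monoid and $h:\Sigma^*\to M$ an equivariant homomorphism satisfying ( * ): every $x\in M$ has a letter representation. Then there is an equivariant function $g:\Sigma\times\Sigma\to\Sigma$ such that for all $a,b\in\Sigma$, $g(a,b)$ is a letter representation of $h(ab)$.
   Context: Atoms $\mathbb A$ are a countably infinite set; atom automorphisms are its bijections; polynomial orbit-finite sets are built from $\mathbb A$ and singletons by finite products and disjoint unions. $x$ is supported by $\bar a$ if every automorphism fixing $\bar a$ pointwise fixes $x$; equivariant means supported by the empty tuple (for functions: $f(\pi x)=\pi f(x)$). The least support of $x$ is the non-repeating tuple supporting $x$ whose atoms occur in every tuple supporting $x$. An orbit-finite monoid has an orbit-finite underlying set (elements finitely supported, finitely many orbits of the automorphisms fixing some tuple) and finitely supported multiplication. A letter representation of $x\in M$ is a letter $a\in\Sigma$ with $h(a)=x$ and the same least support as $x$. *)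

(* Defs.v *)
From mathcomp Require Import all_boot.
From Stdlib Require List.
Set Implicit Arguments. Unset Strict Implicit. Unset Printing Implicit Defensive.

Definition atom := nat.

Record perm := Perm {
  pf : atom -> atom;
  pinv : atom -> atom;
  pf_K : cancel pf pinv;
  pinv_K : cancel pinv pf }.

Definition perm_id : perm := @Perm id id (fun _ => erefl) (fun _ => erefl).

Lemma perm_comp_K (p q : perm) : cancel (pf p \o pf q) (pinv q \o pinv p).
Proof. by move=> x /=; rewrite pf_K pf_K. Qed.
Lemma perm_comp_K' (p q : perm) : cancel (pinv q \o pinv p) (pf p \o pf q).
Proof. by move=> x /=; rewrite pinv_K pinv_K. Qed.
Definition perm_comp (p q : perm) : perm :=
  @Perm (pf p \o pf q) (pinv q \o pinv p) (perm_comp_K p q) (perm_comp_K' p q).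

Definition is_action (X : Type) (act : perm -> X -> X) : Prop :=
  (forall x, act perm_id x = x) /\
  (forall p q x, act (perm_comp p q) x = act p (act q x)).

Definition fixes (pi : perm) (s : seq atom) : Prop :=
  forall a, a \in s -> pf pi a = a.

Definition supports (X : Type) (act : perm -> X -> X) (s : seq atom) (x : X) : Prop :=
  forall pi, fixes pi s -> act pi x = x.

Definition fin_supported (X : Type) (act : perm -> X -> X) (x : X) : Prop :=
  exists s, supports act s x.

Definition least_support (X : Type) (act : perm -> X -> X) (x : X) (s : seq atom) : Prop :=
  [/\ uniq s, supports act s x &
      forall t, supports act t x -> forall a, a \in s -> a \in t].

Definition orbit_finite (X : Type) (act : perm -> X -> X) : Prop :=
  (forall x, fin_supported act x) /\
  exists (s : seq atom) (reps : seq X),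
    forall x, exists2 y, List.In y reps & exists pi, fixes pi s /\ x = act pi y.

Definition orbit_finite_monoid (M : Type) (actM : perm -> M -> M)
    (mul : M -> M -> M) (one : M) : Prop :=
  [/\ is_action actM,
      (forall x y z, mul x (mul y z) = mul (mul x y) z),
      (forall x, mul one x = x /\ mul x one = x),
      orbit_finite actM &
      (* finitely supported multiplication *)
      exists s, forall pi, fixes pi s ->
        forall x y, actM pi (mul x y) = mul (actM pi x) (actM pi y)].

(** Polynomial orbit-finite sets: built from atoms and singletons by finite
    products and finite disjoint unions. *)
Inductive poly :=
  | PEmpty | PUnit | PAtom | PProd of poly & poly | PSum of poly & poly.

Fixpoint pty (p : poly) : Type :=
  match p with
  | PEmpty => Empty_set
  | PUnit => unit
  | PAtom => atom
  | PProd p q => (pty p * pty q)%type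
  | PSum p q => (pty p + pty q)%type
  end.

Fixpoint pact (p : poly) (pi : perm) : pty p -> pty p :=
  match p return pty p -> pty p with
  | PEmpty => fun x => x
  | PUnit => fun x => x
  | PAtom => fun a => pf pi a
  | PProd p q => fun x => (@pact p pi x.1, @pact q pi x.2)
  | PSum p q => fun x => match x with
                         | inl y => inl (@pact p pi y)
                         | inr z => inr (@pact q pi z)
                         end
  end.

Definition wact (p : poly) (pi : perm) (w : seq (pty p)) : seq (pty p) :=
  map (pact pi) w.

Definition pairact (p : poly) (pi : perm) (ab : pty p * pty p) : pty p * pty p :=
  (pact pi ab.1, pact pi ab.2).

Definition is_hom (S : Type) (M : Type) (mul : M -> M -> M) (one : M)
    (h : seq S -> M) : Prop :=
  h [::] = one /\ forall u v, h (u ++ v) = mul (h u) (h v).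

Definition equivariant (X Y : Type) (actX : perm -> X -> X) (actY : perm -> Y -> Y)
    (f : X -> Y) : Prop :=
  forall pi x, f (actX pi x) = actY pi (f x).

(** a is a letter representation of x: h(a) = x and a has the same least
    support as x (same set of least-support tuples). *)
Definition letter_rep (p : poly) (M : Type) (actM : perm -> M -> M)
    (h : seq (pty p) -> M) (x : M) (a : pty p) : Prop :=
  h [:: a] = x /\
  forall s, least_support (@pact p) a s <-> least_support actM x s.

(* Main.v *)
Require Import Defs.
From mathcomp Require Import all_boot.
From Stdlib Require Import ClassicalEpsilon FunctionalExtensionality PropExtensionality ProofIrrelevance.

Fixpoint patoms (p : poly) : pty p -> seq atom :=
  match p return pty p -> seq atom with
  | PEmpty => fun _ => [::]
  | PUnit => fun _ => [::]
  | PAtom => fun a => [:: a]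
  | PProd p q => fun x => @patoms p x.1 ++ @patoms q x.2
  | PSum p q => fun x => match x with
                         | inl y => @patoms p y
                         | inr z => @patoms q z
                         end
  end.
Arguments patoms {p}.

Lemma perm_ext (p q : perm) : pf p =1 pf q -> p = q.
Proof.
case: p => f fi fK fiK; case: q => g gi gK giK /= H.
have Ef : f = g by apply: functional_extensionality.
subst g.
have Ei : fi = gi.
  apply: functional_extensionality => a. by rewrite -{1}(giK a) fK.
subst gi.
by rewrite (proof_irrelevance _ fK gK) (proof_irrelevance _ fiK giK).
Qed.

Definition perm_inv (p : perm) : perm := Perm (pinv_K p) (pf_K p).

Lemma pact_action p : is_action (@pact p).
Proof.
split.
- elim: p => //= [p IHp q IHq [x y]|p IHp q IHq [x|y]] /=; by rewrite ?IHp ?IHq.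
- move=> r s; elim: p => //= [p IHp q IHq [x y]|p IHp q IHq [x|y]] /=; by rewrite ?IHp ?IHq.
Qed.

Lemma pact_fix p (pi : perm) (x : pty p) : fixes pi (patoms x) -> pact pi x = x.
Proof.
elim: p x => //= [a H|p IHp q IHq [x y] H|p IHp q IHq [x|y] H] /=.
- by apply: H; rewrite inE.
- rewrite IHp ?IHq // => a Ha; apply: H; rewrite mem_cat Ha ?orbT //.
- by rewrite IHp.
- by rewrite IHq.
Qed.

Lemma pact_fix_inv p (pi : perm) (x : pty p) : pact pi x = x -> fixes pi (patoms x).
Proof.
elim: p x => [x _ b|x _ b|a H b|p IHp q IHq [x y] [H1 H2] b|p IHp q IHq [x|y] H] //=; try by rewrite inE => /eqP ->.
- rewrite mem_cat => /orP [Hb|Hb]; [exact: (IHp _ H1 _ Hb)| exact: (IHq _ H2 _ Hb)].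
- by case: H => /IHp.
- by case: H => /IHq.
Qed.

Arguments pact_fix_inv {p pi x}.
Lemma patoms_act p (pi : perm) (x : pty p) : patoms (pact pi x) = map (pf pi) (patoms x).
Proof.
elim: p x => //= [p IHp q IHq [x y]|p IHp q IHq [x|y]] /=; by rewrite ?IHp ?IHq ?map_cat.
Qed.

Definition sw (a b z : atom) : atom := if z == a then b else if z == b then a else z.
Lemma swK a b : cancel (sw a b) (sw a b).
Proof.
move=> z; rewrite /sw.
case: (eqVneq z a) => [->|za]; first by rewrite eqxx; case: (eqVneq b a) => // ->.
case: (eqVneq z b) => [->|zb]; first by rewrite eqxx.
by rewrite (negbTE za) (negbTE zb).
Qed.
Definition swp a b : perm := Perm (swK a b) (swK a b).

Lemma le_sumn (l : seq nat) x : x \in l -> x <= sumn l.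
Proof.
elim: l => //= y l IH; rewrite in_cons => /orP [/eqP->|/IH H]; first exact: leq_addr.
exact: leq_trans H (leq_addl _ _).
Qed.

Lemma ls_exists {p} (x : pty p) : least_support (@pact p) x (undup (patoms x)).
Proof.
split; first exact: undup_uniq.
- by move=> pi F; apply: pact_fix => a Ha; apply: F; rewrite mem_undup.
- move=> t St a; rewrite mem_undup => Ha.
  apply/negPn/negP => Hat.
  set b := (sumn (a :: t ++ patoms x)).+1.
  have Hb : b \notin a :: t ++ patoms x.
    by apply/negP => /le_sumn; rewrite ltnn.
  move: Hb; rewrite in_cons mem_cat negb_or negb_or => /and3P [ba bt bx].
  have F : fixes (swp a b) t.
    move=> z zt /=; rewrite /sw.
    have -> : (z == a) = false by apply/negP => /eqP E; subst z; rewrite zt in Hat.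
    have -> : (z == b) = false by apply/negP => /eqP E; subst z; rewrite zt in bt.
    done.
  have := St _ F => E.
  have : pf (swp a b) a \in patoms (pact (swp a b) x) by rewrite patoms_act map_f.
  by rewrite E /= /sw eqxx (negbTE bx).
Qed.

Lemma sup_act {X} {act : perm -> X -> X} (A : is_action act) pi {t x} :
  supports act t x -> supports act (map (pf pi) t) (act pi x).
Proof.
move=> St rho Fr.
set sg := perm_comp (perm_inv pi) (perm_comp rho pi).
have Fs : fixes sg t.
  move=> a Ha /=; rewrite /sg /=.
  by rewrite (Fr (pf pi a) (map_f _ Ha)) pf_K.
have E : perm_comp rho pi = perm_comp pi sg.
  by apply: perm_ext => a /=; rewrite pinv_K.
by rewrite -(proj2 A) E (proj2 A) (St _ Fs).
Qed.

Lemma act_invK {X} {act : perm -> X -> X} (A : is_action act) pi x :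
  act (perm_inv pi) (act pi x) = x.
Proof.
rewrite -(proj2 A).
have -> : perm_comp (perm_inv pi) pi = perm_id by apply: perm_ext => z /=; rewrite pf_K.
by rewrite (proj1 A).
Qed.

Lemma ls_act {X} {act : perm -> X -> X} (A : is_action act) pi {x s} :
  least_support act x s -> least_support act (act pi x) (map (pf pi) s).
Proof.
case=> U S L; split.
- rewrite map_inj_uniq //; exact: can_inj (pf_K pi).
- exact: sup_act.
- move=> t St b /mapP [a Ha ->].
  have St' : supports act (map (pinv pi) t) x.
    have := sup_act A (perm_inv pi) St. by rewrite act_invK.
  have := L _ St' a Ha. case/mapP => c Hc ->. by rewrite pinv_K.
Qed.

Lemma ls_act_iff {X} {act : perm -> X -> X} (A : is_action act) pi x s :
  least_support act (act pi x) s <-> least_support act x (map (pinv pi) s).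
Proof.
split.
- move=> H; have := ls_act A (perm_inv pi) H. by rewrite act_invK.
- move=> H; have := ls_act A pi H.
  by rewrite -map_comp (eq_map (pinv_K pi)) map_id.
Qed.

Lemma lr_act (Sigma : poly) M (actM : perm -> M -> M) (h : seq (pty Sigma) -> M)
  (AM : is_action actM) (He : equivariant (@wact Sigma) actM h) pi m c :
  letter_rep actM h m c -> letter_rep actM h (actM pi m) (pact pi c).
Proof.
case=> H1 H2; split.
- by rewrite -H1 -He.
- move=> s. rewrite (ls_act_iff (pact_action Sigma)) (ls_act_iff AM). exact: H2.
Qed.

Lemma lr_sup (Sigma : poly) M (actM : perm -> M -> M) (h : seq (pty Sigma) -> M) m c t :
  letter_rep actM h m c -> supports actM t m -> supports (@pact Sigma) t c.
Proof.
case=> _ H St pi F; apply: pact_fix => a Ha.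
apply: F. have [_ _ L] := (H _).1 (ls_exists c).
by apply: (L _ St); rewrite mem_undup.
Qed.

Lemma pairact_comp {p} r s x : pairact (perm_comp r s) x = @pairact p r (pairact s x).
Proof. by case: x => a b; rewrite /pairact /= !(proj2 (pact_action p)). Qed.

Lemma pairact_invK {p} r x : pairact (perm_inv r) (@pairact p r x) = x.
Proof. by case: x => a b; rewrite /pairact /= !(act_invK (pact_action p)). Qed.

Lemma pairact_id {p} x : @pairact p perm_id x = x.
Proof. by case: x => a b; rewrite /pairact /= !(proj1 (pact_action p)). Qed.

Arguments lr_sup {Sigma M actM h m c t}.
Arguments lr_act {Sigma M actM h} AM He pi {m c}.

Theorem mainTheorem14 (Sigma : poly) (M : Type) (actM : perm -> M -> M)
    (mul : M -> M -> M) (one : M) (h : seq (pty Sigma) -> M) :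
  orbit_finite_monoid actM mul one ->
  is_hom mul one h ->
  equivariant (@wact Sigma) actM h ->
  (forall x : M, exists a : pty Sigma, letter_rep actM h x a) ->
  exists g : pty Sigma * pty Sigma -> pty Sigma,
    equivariant (@pairact Sigma) (@pact Sigma) g /\
    forall a b : pty Sigma, letter_rep actM h (h [:: a; b]) (g (a, b)).
Proof.
move=> [AM _ _ _ _] _ He Hr.
have [crep Hc] : exists f : M -> pty Sigma, forall m, letter_rep actM h m (f m).
  exists (fun m => proj1_sig (constructive_indefinite_description _ (Hr m))).
  move=> m; exact: proj2_sig.
pose Orb (x y : pty Sigma * pty Sigma) := exists pi, x = pairact pi y.
pose rep x := epsilon (inhabits x) (Orb x).
have rep_spec : forall x, Orb x (rep x).
  move=> x; apply: (epsilon_spec (inhabits x) (Orb x)); exists x, perm_id; by rewrite pairact_id.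
have rep_eq : forall pi x, rep (pairact pi x) = rep x.
  move=> pi x; rewrite /rep.
  have -> : Orb (pairact pi x) = Orb x.
    apply: functional_extensionality => y; apply: propositional_extensionality; split.
    - case=> r E; exists (perm_comp (perm_inv pi) r).
      by rewrite pairact_comp -E pairact_invK.
    - case=> r ->; exists (perm_comp pi r); by rewrite pairact_comp.
  by rewrite (proof_irrelevance _ (inhabits (pairact pi x)) (inhabits x)).
pose piof x := proj1_sig (constructive_indefinite_description _ (rep_spec x)).
have piof_spec : forall x, x = pairact (piof x) (rep x).
  move=> x; exact: (proj2_sig (constructive_indefinite_description _ (rep_spec x))).
pose hr (r : pty Sigma * pty Sigma) := h [:: r.1; r.2].
have hr_sup : forall r, supports actM (patoms r.1 ++ patoms r.2) (hr r).
  move=> [r1 r2] pi F; rewrite /hr /= -He /wact /=.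
  rewrite !pact_fix // => a Ha; apply: F; rewrite mem_cat Ha ?orbT //.
exists (fun x => pact (piof x) (crep (hr (rep x)))).
split.
- move=> sg x.
  have Er := rep_eq sg x.
  move: (piof (pairact sg x)) (piof_spec (pairact sg x)) => p' Hp'.
  move: (piof x) (piof_spec x) => p Hp.
  rewrite Er in Hp' *.
  move: (rep x) Hp Hp' => r Hp Hp'.
  set c := crep (hr r).
  pose tau := perm_comp (perm_inv (perm_comp sg p)) p'.
  have Tr : pairact tau r = r.
    by rewrite /tau pairact_comp -Hp' Hp -(pairact_comp sg p) pairact_invK.
  have Ft : fixes tau (patoms r.1 ++ patoms r.2).
    move: Tr; case: r {Hp Hp' c} => r1 r2 [T1 T2] a /=.
    rewrite mem_cat => /orP [] Ha; [exact: (pact_fix_inv T1 _ Ha) | exact: (pact_fix_inv T2 _ Ha)].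
  have Tc : pact tau c = c := lr_sup (Hc (hr r)) (hr_sup r) tau Ft.
  have -> : p' = perm_comp (perm_comp sg p) tau.
    by apply: perm_ext => a /=; rewrite !pinv_K.
  by rewrite (proj2 (pact_action Sigma)) Tc (proj2 (pact_action Sigma)).
- move=> a b.
  have E := piof_spec (a, b).
  move: (piof (a, b)) (rep (a, b)) E => p r E.
  have -> : h [:: a; b] = actM p (hr r).
    by rewrite /hr -He /wact /= -[a]/((a, b).1) -[b]/((a, b).2) E.
  exact: lr_act.
Qed.
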